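(* Let $\mathbf E$ be a real symmetric $3\times3$ matrix and $\hat{\mathbf e}\in\mathbb R^3$ with $|\hat{\mathbf e}|=1$. Let $\mathbf Q=-\mathbf I+2\hat{\mathbf e}\otimes\hat{\mathbf e}$, $\hat{\mathbf E}=\mathbf Q\mathbf E\mathbf Q^T$, suppose $\hat{\mathbf E}\ne\mathbf E$, and define $$\mathbf a=4\big((\hat{\mathbf e}\cdot\mathbf E\hat{\mathbf e})\hat{\mathbf e}-\mathbf E\hat{\mathbf e}\big),\qquad\mathbf n=\hat{\mathbf e}.$$ Then there exist $\mathbf b_f,\mathbf m_f\in\mathbb R^3$ with $$f\hat{\mathbf E}+(1-f)\mathbf E=\tfrac12(\mathbf b_f\otimes\mathbf m_f+\mathbf m_f\otimes\mathbf b_f)$$ for every $0\le f\le1$ if and only if (CCL1) the middle eigenvalue $\varepsilon_2$ of $\mathbf E$ is $0$ and $\mathrm{rank}\,\mathbf E=2$; (CCL2) $(\mathbf a\cdot\mathbf v_2)(\mathbf n\cdot\mathbf v_2)=0$, where $\mathbf E\mathbf v_2=0$, $|\mathbf v_2|=1$; (CCL3) $\big(\mathrm{tr}(\mathbf E+\hat{\mathbf E})\big)^2-\mathrm{tr}\big((\mathbf E+\hat{\mathbf E})^2\big)\le0$.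
   Context: $\mathbf a\otimes\mathbf n$ denotes the matrix $\mathbf x\mapsto(\mathbf n\cdot\mathbf x)\mathbf a$. *)

(* Defs.v *)
From HB Require Import structures.
From mathcomp Require Import all_boot all_order all_algebra.
From mathcomp Require Import reals.
Set Implicit Arguments. Unset Strict Implicit. Unset Printing Implicit Defensive.
Import Order.TTheory GRing.Theory Num.Theory.
Local Open Scope ring_scope.

Definition dotv (R : realType) (n : nat) (u v : 'cV[R]_n) : R := (u^T *m v) 0 0.

Definition tens (R : realType) (n : nat) (a b : 'cV[R]_n) : 'M[R]_n := a *m b^T.

Definition middle_eigenvalue (R : realType) (A : 'M[R]_3) (x : R) : Prop :=
  exists e1 e3 : R, e1 <= x <= e3 /\
    char_poly A = ('X - e1%:P) * ('X - x%:P) * ('X - e3%:P).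

(* Main.v *)
Require Import Defs.
From HB Require Import structures.
From mathcomp Require Import all_boot all_order all_algebra.
From mathcomp Require Import reals.
From mathcomp Require Import ring lra.
Import Order.TTheory GRing.Theory Num.Theory.
Local Open Scope ring_scope.
Set Implicit Arguments. Unset Strict Implicit.

Section S.
Variable T : nmodType.
Lemma sum3 (F : 'I_3 -> T) : \sum_(i < 3) F i = F 0 + F 1 + F 2.
Proof.
rewrite !big_ord_recr big_ord0 /= add0r.
congr (F _ + F _ + F _); apply/val_inj => //=.
Qed.
Lemma sum2 (F : 'I_2 -> T) : \sum_(i < 2) F i = F 0 + F 1.
Proof.
rewrite !big_ord_recr big_ord0 /= add0r.
congr (F _ + F _); apply/val_inj => //=.
Qed.
End S.
Lemma ord3P (i : 'I_3) : [\/ i = 0, i = 1 | i = 2].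
Proof.
case: i => [[|[|[|i]]] Hi] //=.
- by constructor 1; apply/val_inj.
- by constructor 2; apply/val_inj.
- by constructor 3; apply/val_inj.
Qed.
Section Scalar.
Variable R : realType.
Definition det6 (m00 m01 m02 m11 m12 m22 : R) :=
  m00 * (m11 * m22 - m12 * m12) - m01 * (m01 * m22 - m12 * m02) + m02 * (m01 * m12 - m11 * m02).
Definition I26 (m00 m01 m02 m11 m12 m22 : R) :=
  m00 * m11 - m01 * m01 + m00 * m22 - m02 * m02 + m11 * m22 - m12 * m12.
Definition adjsum (m00 m01 m02 m11 m12 m22 n00 n01 n02 n11 n12 n22 : R) :=
  (m11 * m22 - m12 * m12) * n00 + (m00 * m22 - m02 * m02) * n11 + (m00 * m11 - m01 * m01) * n22
  + 2 * ( - (m01 * m22 - m12 * m02) * n01 + (m01 * m12 - m11 * m02) * n02 - (m00 * m12 - m01 * m02) * n12).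
Definition mixed (m00 m01 m02 m11 m12 m22 n00 n01 n02 n11 n12 n22 : R) :=
  m00 * n11 + m11 * n00 - 2 * m01 * n01 + m00 * n22 + m22 * n00 - 2 * m02 * n02
  + m11 * n22 + m22 * n11 - 2 * m12 * n12.

Lemma det_expand m00 m01 m02 m11 m12 m22 n00 n01 n02 n11 n12 n22 f :
  det6 (m00 + f * n00) (m01 + f * n01) (m02 + f * n02) (m11 + f * n11) (m12 + f * n12) (m22 + f * n22)
  = det6 m00 m01 m02 m11 m12 m22
    + f * adjsum m00 m01 m02 m11 m12 m22 n00 n01 n02 n11 n12 n22
    + f^+2 * adjsum n00 n01 n02 n11 n12 n22 m00 m01 m02 m11 m12 m22
    + f^+3 * det6 n00 n01 n02 n11 n12 n22.
Proof. rewrite /det6 /adjsum; ring. Qed.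

Lemma I2_expand m00 m01 m02 m11 m12 m22 n00 n01 n02 n11 n12 n22 f :
  I26 (m00 + f * n00) (m01 + f * n01) (m02 + f * n02) (m11 + f * n11) (m12 + f * n12) (m22 + f * n22)
  = I26 m00 m01 m02 m11 m12 m22
    + f * mixed m00 m01 m02 m11 m12 m22 n00 n01 n02 n11 n12 n22
    + f^+2 * I26 n00 n01 n02 n11 n12 n22.
Proof. rewrite /I26 /mixed; ring. Qed.

Definition sy (a b c d : R) := (a * b + c * d) / 2.

Lemma sym_det a0 a1 a2 b0 b1 b2 :
  det6 (sy a0 b0 a0 b0) (sy a0 b1 a1 b0) (sy a0 b2 a2 b0)
       (sy a1 b1 a1 b1) (sy a1 b2 a2 b1) (sy a2 b2 a2 b2) = 0.
Proof. by rewrite /det6 /sy; field. Qed.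

Lemma sym_I2 a0 a1 a2 b0 b1 b2 :
  I26 (sy a0 b0 a0 b0) (sy a0 b1 a1 b0) (sy a0 b2 a2 b0)
       (sy a1 b1 a1 b1) (sy a1 b2 a2 b1) (sy a2 b2 a2 b2) =
  - ((a0 * b1 - a1 * b0)^+2 + (a0 * b2 - a2 * b0)^+2 + (a1 * b2 - a2 * b1)^+2) / 4.
Proof. by rewrite /I26 /sy; field. Qed.

Lemma sym_I2_le a0 a1 a2 b0 b1 b2 :
  I26 (sy a0 b0 a0 b0) (sy a0 b1 a1 b0) (sy a0 b2 a2 b0)
       (sy a1 b1 a1 b1) (sy a1 b2 a2 b1) (sy a2 b2 a2 b2) <= 0.
Proof.
rewrite sym_I2 mulNr oppr_le0; apply: divr_ge0 => //.
by rewrite !addr_ge0 // sqr_ge0.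
Qed.

Definition factP (s00 s01 s02 s11 s12 s22 : R) := exists b0 b1 b2 m0 m1 m2 : R,
  s00 = sy b0 m0 b0 m0 /\ s01 = sy b0 m1 b1 m0 /\ s02 = sy b0 m2 b2 m0 /\
      s11 = sy b1 m1 b1 m1 /\ s12 = sy b1 m2 b2 m1 /\ s22 = sy b2 m2 b2 m2.

Lemma sqrt_pair (A C Bc : R) : A <= 0 -> C <= 0 -> Bc ^+ 2 = A * C ->
  exists l2 l3 : R, [/\ l2 ^+ 2 = - A, l3 ^+ 2 = - C & l2 * l3 = - Bc].
Proof.
move=> hA hC hB.
have [A0|A0] := eqVneq A 0.
  have B0 : Bc = 0 by apply/eqP; rewrite -sqrf_eq0 hB A0 mul0r.
  exists 0, (Num.sqrt (- C)); rewrite sqr_sqrtr ?oppr_ge0 // A0 B0.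
  by split => //; rewrite ?expr2 ?mul0r ?oppr0.
have hA' : 0 < - A by rewrite oppr_gt0 lt_neqAle A0 hA.
have l2n : Num.sqrt (- A) != 0 by rewrite sqrtr_eq0 -ltNge.
exists (Num.sqrt (- A)), (- Bc / Num.sqrt (- A)).
split.
- by rewrite sqr_sqrtr // ltW.
- rewrite expr_div_n sqr_sqrtr ?(ltW hA') // sqrrN hB.
  by field.
- by field.
Qed.

Lemma factor_core s00 s01 s02 s11 s12 s22 : s00 != 0 ->
  det6 s00 s01 s02 s11 s12 s22 = 0 -> I26 s00 s01 s02 s11 s12 s22 <= 0 ->
  factP s00 s01 s02 s11 s12 s22.
Proof.
move=> h0 hdet hI.
set A := s00 * s11 - s01 ^+ 2.
set C := s00 * s22 - s02 ^+ 2.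
set Bc := s00 * s12 - s01 * s02.
have hdisc : Bc ^+ 2 = A * C.
  apply/eqP; rewrite -subr_eq0; apply/eqP.
  have -> : Bc ^+ 2 - A * C = - s00 * det6 s00 s01 s02 s11 s12 s22
    by rewrite /Bc /A /C /det6; ring.
  by rewrite hdet mulr0.
have hM : s00 ^+ 2 * (s11 * s22 - s12 ^+ 2) =
    s00 * det6 s00 s01 s02 s11 s12 s22 + (A * s02 ^+ 2 + C * s01 ^+ 2 - 2 * Bc * s01 * s02)
  by rewrite /Bc /A /C /det6; ring.
rewrite hdet mulr0 add0r in hM.
have hI' : I26 s00 s01 s02 s11 s12 s22 = A + C + (s11 * s22 - s12 ^+ 2)
  by rewrite /I26 /A /C; ring.
have s2 : 0 < s00 ^+ 2 by rewrite exprn_even_gt0 //.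
have hA : A <= 0.
  rewrite leNgt; apply/negP => Ap.
  have Cp : 0 <= C.
    have : 0 <= A * C by rewrite -hdisc sqr_ge0.
    by rewrite pmulr_rge0.
  have F : 0 <= A * s02 ^+ 2 + C * s01 ^+ 2 - 2 * Bc * s01 * s02.
    have : 0 <= A * (A * s02 ^+ 2 + C * s01 ^+ 2 - 2 * Bc * s01 * s02).
      have -> : A * (A * s02 ^+ 2 + C * s01 ^+ 2 - 2 * Bc * s01 * s02) =
        (A * s02 - Bc * s01) ^+ 2 + (A * C - Bc ^+ 2) * s01 ^+ 2 by ring.
      by rewrite hdisc subrr mul0r addr0 sqr_ge0.
    by rewrite pmulr_rge0.
  have : 0 <= s11 * s22 - s12 ^+ 2.
    by rewrite -(pmulr_rge0 _ s2) hM.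
  move=> M0; move: hI; rewrite hI'; lra.
have hC : C <= 0.
  rewrite leNgt; apply/negP => Cp.
  have Ap : 0 <= A.
    have : 0 <= C * A by rewrite mulrC -hdisc sqr_ge0.
    by rewrite pmulr_rge0.
  have F : 0 <= A * s02 ^+ 2 + C * s01 ^+ 2 - 2 * Bc * s01 * s02.
    have : 0 <= C * (A * s02 ^+ 2 + C * s01 ^+ 2 - 2 * Bc * s01 * s02).
      have -> : C * (A * s02 ^+ 2 + C * s01 ^+ 2 - 2 * Bc * s01 * s02) =
        (C * s01 - Bc * s02) ^+ 2 + (A * C - Bc ^+ 2) * s02 ^+ 2 by ring.
      by rewrite hdisc subrr mul0r addr0 sqr_ge0.
    by rewrite pmulr_rge0.
  have : 0 <= s11 * s22 - s12 ^+ 2.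
    by rewrite -(pmulr_rge0 _ s2) hM.
  move=> M0; move: hI; rewrite hI'; lra.
have [l2 [l3 [h2 h3 h23]]] := sqrt_pair hA hC hdisc.
rewrite /A in h2; rewrite /C in h3; rewrite /Bc in h23.
exists 1, ((s01 - l2) / s00), ((s02 - l3) / s00), s00, (s01 + l2), (s02 + l3).
rewrite /sy; do !split.
- by field.
- by field.
- by field.
- by field: h2.
- by field: h23.
- by field: h3.
Qed.

Lemma factor s00 s01 s02 s11 s12 s22 :
  det6 s00 s01 s02 s11 s12 s22 = 0 -> I26 s00 s01 s02 s11 s12 s22 <= 0 ->
  factP s00 s01 s02 s11 s12 s22.
Proof.
move=> hdet hI.
have [h0|h0] := eqVneq s00 0; last exact: factor_core.
have [h1|h1] := eqVneq s11 0.
  have [h2|h2] := eqVneq s22 0.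
    have hd : 2 * s01 * s02 * s12 = 0.
      by rewrite -hdet h0 h1 h2 /det6; ring.
    have [k01|k01] := eqVneq s01 0.
      exists 0, 0, 1, (2 * s02), (2 * s12), 0; rewrite /sy.
      by rewrite h0 h1 h2 k01; do !split; field.
    have [k02|k02] := eqVneq s02 0.
      exists 0, 1, 0, (2 * s01), 0, (2 * s12); rewrite /sy.
      by rewrite h0 h1 h2 k02; do !split; field.
    have k12 : s12 = 0.
      by move/eqP: hd; rewrite !mulf_eq0 (negPf k01) (negPf k02) pnatr_eq0 /= => /eqP.
    exists 1, 0, 0, 0, (2 * s01), (2 * s02); rewrite /sy.
    by rewrite h0 h1 h2 k12; do !split; field.
  have := @factor_core s22 s02 s12 s00 s01 s11 h2.
  have -> : det6 s22 s02 s12 s00 s01 s11 = det6 s00 s01 s02 s11 s12 s22 by rewrite /det6; ring.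
  have -> : I26 s22 s02 s12 s00 s01 s11 = I26 s00 s01 s02 s11 s12 s22 by rewrite /I26; ring.
  move=> /(_ hdet hI) [b2 [b0 [b1 [m2 [m0 [m1 [E0 [E1 [E2 [E3 [E4 E5]]]]]]]]]]].
  exists b0, b1, b2, m0, m1, m2; rewrite /sy in E0 E1 E2 E3 E4 E5 *.
  do !split; lra.
have := @factor_core s11 s01 s12 s00 s02 s22 h1.
have -> : det6 s11 s01 s12 s00 s02 s22 = det6 s00 s01 s02 s11 s12 s22 by rewrite /det6; ring.
have -> : I26 s11 s01 s12 s00 s02 s22 = I26 s00 s01 s02 s11 s12 s22 by rewrite /I26; ring.
move=> /(_ hdet hI) [b1 [b0 [b2 [m1 [m0 [m2 [E0 [E1 [E2 [E3 [E4 E5]]]]]]]]]]].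
exists b0, b1, b2, m0, m1, m2; rewrite /sy in E0 E1 E2 E3 E4 E5 *.
do !split; lra.
Qed.

Section Spec.
Variables x00 x01 x02 x11 x12 x22 : R.
Definition F00 := x11 * x22 - x12 * x12.
Definition F11 := x00 * x22 - x02 * x02.
Definition F22 := x00 * x11 - x01 * x01.
Definition F01 := - (x01 * x22 - x12 * x02).
Definition F02 := x01 * x12 - x11 * x02.
Definition F12 := - (x00 * x12 - x01 * x02).
Definition qF (p0 p1 p2 q0 q1 q2 : R) :=
  p0 * (F00 * q0 + F01 * q1 + F02 * q2) + p1 * (F01 * q0 + F11 * q1 + F12 * q2)
  + p2 * (F02 * q0 + F12 * q1 + F22 * q2).

Lemma adjsum_qF a0 a1 a2 e0 e1 e2 :
  adjsum x00 x01 x02 x11 x12 x22 (sy a0 e0 a0 e0) (sy a0 e1 a1 e0) (sy a0 e2 a2 e0)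
     (sy a1 e1 a1 e1) (sy a1 e2 a2 e1) (sy a2 e2 a2 e2) = qF a0 a1 a2 e0 e1 e2.
Proof. by rewrite /adjsum /qF /sy /F00 /F11 /F22 /F01 /F02 /F12; field. Qed.

Lemma G_identity p0 p1 p2 q0 q1 q2 :
  qF p0 p1 p2 p0 p1 p2 * qF q0 q1 q2 q0 q1 q2 - (qF p0 p1 p2 q0 q1 q2) ^+ 2 =
  det6 x00 x01 x02 x11 x12 x22 *
  (let u0 := p1 * q2 - p2 * q1 in let u1 := p2 * q0 - p0 * q2 in
   let u2 := p0 * q1 - p1 * q0 in
   u0 * (x00 * u0 + x01 * u1 + x02 * u2) + u1 * (x01 * u0 + x11 * u1 + x12 * u2)
   + u2 * (x02 * u0 + x12 * u1 + x22 * u2)).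
Proof. rewrite /qF /det6 /F00 /F11 /F22 /F01 /F02 /F12 /=; ring. Qed.

Lemma qF_sym p0 p1 p2 q0 q1 q2 : qF p0 p1 p2 q0 q1 q2 = qF q0 q1 q2 p0 p1 p2.
Proof. rewrite /qF; ring. Qed.

Hypothesis hdet : det6 x00 x01 x02 x11 x12 x22 = 0.

Lemma vlemma v0 v1 v2 :
  x00 * v0 + x01 * v1 + x02 * v2 = 0 ->
  x01 * v0 + x11 * v1 + x12 * v2 = 0 ->
  x02 * v0 + x12 * v1 + x22 * v2 = 0 ->
  v0 * v0 + v1 * v1 + v2 * v2 = 1 ->
  I26 x00 x01 x02 x11 x12 x22 != 0 ->
  forall a0 a1 a2 e0 e1 e2,
  qF a0 a1 a2 e0 e1 e2 = I26 x00 x01 x02 x11 x12 x22 * (a0 * v0 + a1 * v1 + a2 * v2)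
     * (e0 * v0 + e1 * v1 + e2 * v2).
Proof.
move=> k0 k1 k2 hv hI a0 a1 a2 e0 e1 e2.
set I := I26 _ _ _ _ _ _.
have Fv : forall q0 q1 q2, qF v0 v1 v2 q0 q1 q2 = I * (v0 * q0 + v1 * q1 + v2 * q2).
  move=> q0 q1 q2.
  have -> : qF v0 v1 v2 q0 q1 q2 = I * (v0 * q0 + v1 * q1 + v2 * q2)
    + q0 * (- (x00 + x11 + x22) * (x00 * v0 + x01 * v1 + x02 * v2)
         + x00 * (x00 * v0 + x01 * v1 + x02 * v2) + x01 * (x01 * v0 + x11 * v1 + x12 * v2)
         + x02 * (x02 * v0 + x12 * v1 + x22 * v2))
    + q1 * (- (x00 + x11 + x22) * (x01 * v0 + x11 * v1 + x12 * v2)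
         + x01 * (x00 * v0 + x01 * v1 + x02 * v2) + x11 * (x01 * v0 + x11 * v1 + x12 * v2)
         + x12 * (x02 * v0 + x12 * v1 + x22 * v2))
    + q2 * (- (x00 + x11 + x22) * (x02 * v0 + x12 * v1 + x22 * v2)
         + x02 * (x00 * v0 + x01 * v1 + x02 * v2) + x12 * (x01 * v0 + x11 * v1 + x12 * v2)
         + x22 * (x02 * v0 + x12 * v1 + x22 * v2)).
    by rewrite /qF /I /I26 /F00 /F11 /F22 /F01 /F02 /F12; ring.
  by rewrite k0 k1 k2; ring.
have qq : forall q0 q1 q2, qF q0 q1 q2 q0 q1 q2 = I * (v0 * q0 + v1 * q1 + v2 * q2) ^+ 2.
  move=> q0 q1 q2.
  have := G_identity v0 v1 v2 q0 q1 q2.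
  rewrite hdet mul0r Fv Fv.
  have -> : v0 * v0 + v1 * v1 + v2 * v2 = 1 by rewrite -hv.
  rewrite mulr1 => /eqP; rewrite subr_eq0 => /eqP h.
  apply: (mulfI hI); rewrite h /I; ring.
have pol : qF a0 a1 a2 e0 e1 e2 = (qF (a0 + e0) (a1 + e1) (a2 + e2) (a0 + e0) (a1 + e1) (a2 + e2)
    - qF a0 a1 a2 a0 a1 a2 - qF e0 e1 e2 e0 e1 e2) / 2.
  by rewrite /qF; field.
by rewrite pol !qq /I; field.
Qed.
End Spec.
Lemma kernel_of_col x00 x01 x02 x11 x12 x22 k0 k1 k2 :
  x00 * k0 + x01 * k1 + x02 * k2 = 0 ->
  x01 * k0 + x11 * k1 + x12 * k2 = 0 ->
  x02 * k0 + x12 * k1 + x22 * k2 = 0 ->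
  k0 * k0 + k1 * k1 + k2 * k2 != 0 ->
  exists v0 v1 v2 : R, [/\ x00 * v0 + x01 * v1 + x02 * v2 = 0,
    x01 * v0 + x11 * v1 + x12 * v2 = 0,
    x02 * v0 + x12 * v1 + x22 * v2 = 0 &
    v0 * v0 + v1 * v1 + v2 * v2 = 1].
Proof.
move=> h0 h1 h2 hk.
set N := k0 * k0 + k1 * k1 + k2 * k2.
have N0 : 0 <= N by rewrite /N -!expr2 !addr_ge0 // sqr_ge0.
have sN : Num.sqrt N != 0 by rewrite sqrtr_eq0 -ltNge lt_neqAle eq_sym hk.
exists (k0 / Num.sqrt N), (k1 / Num.sqrt N), (k2 / Num.sqrt N); split.
- have -> : x00 * (k0 / Num.sqrt N) + x01 * (k1 / Num.sqrt N) + x02 * (k2 / Num.sqrt N) = (x00 * k0 + x01 * k1 + x02 * k2) / Num.sqrt N by field.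
  by rewrite h0 mul0r.
- have -> : x01 * (k0 / Num.sqrt N) + x11 * (k1 / Num.sqrt N) + x12 * (k2 / Num.sqrt N) = (x01 * k0 + x11 * k1 + x12 * k2) / Num.sqrt N by field.
  by rewrite h1 mul0r.
- have -> : x02 * (k0 / Num.sqrt N) + x12 * (k1 / Num.sqrt N) + x22 * (k2 / Num.sqrt N) = (x02 * k0 + x12 * k1 + x22 * k2) / Num.sqrt N by field.
  by rewrite h2 mul0r.
- have -> : k0 / Num.sqrt N * (k0 / Num.sqrt N) + k1 / Num.sqrt N * (k1 / Num.sqrt N)
     + k2 / Num.sqrt N * (k2 / Num.sqrt N) = N / (Num.sqrt N) ^+ 2 by rewrite /N; field.
  by rewrite sqr_sqrtr // divff.
Qed.

Lemma kernel_exists x00 x01 x02 x11 x12 x22 :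
  det6 x00 x01 x02 x11 x12 x22 = 0 -> I26 x00 x01 x02 x11 x12 x22 != 0 ->
  exists v0 v1 v2 : R, [/\ x00 * v0 + x01 * v1 + x02 * v2 = 0,
    x01 * v0 + x11 * v1 + x12 * v2 = 0,
    x02 * v0 + x12 * v1 + x22 * v2 = 0 &
    v0 * v0 + v1 * v1 + v2 * v2 = 1].
Proof.
move=> hd hI.
have tr : I26 x00 x01 x02 x11 x12 x22 = F00 x11 x12 x22 + F11 x00 x02 x22 + F22 x00 x01 x11
  by rewrite /I26 /F00 /F11 /F22; ring.
have nz : forall k0 k1 k2 : R, k0 != 0 -> k0 * k0 + k1 * k1 + k2 * k2 != 0.
  move=> k0 k1 k2 hk; rewrite -!expr2 lt0r_neq0 // ltr_pwDl ?sqr_ge0 //.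
  by rewrite ltr_pwDl ?sqr_ge0 // exprn_even_gt0.
have [h0|h0] := eqVneq (F00 x11 x12 x22) 0.
  have [h1|h1] := eqVneq (F11 x00 x02 x22) 0.
    have h2 : F22 x00 x01 x11 != 0 by move: hI; rewrite tr h0 h1 !add0r.
    apply: (@kernel_of_col _ _ _ _ _ _ (F02 x01 x02 x11 x12) (F12 x00 x01 x02 x12) (F22 x00 x01 x11)).
    - by rewrite /F02 /F12 /F22; ring.
    - by rewrite /F02 /F12 /F22; ring.
    - by rewrite -hd /det6 /F02 /F12 /F22; ring.
    - apply: contra_neq (nz _ (F02 x01 x02 x11 x12) (F12 x00 x01 x02 x12) h2) => H.
      by rewrite -H; ring.
  apply: (@kernel_of_col _ _ _ _ _ _ (F01 x01 x02 x12 x22) (F11 x00 x02 x22) (F12 x00 x01 x02 x12)).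
  - by rewrite /F01 /F11 /F12; ring.
  - by rewrite -hd /det6 /F01 /F11 /F12; ring.
  - by rewrite /F01 /F11 /F12; ring.
  - apply: contra_neq (nz _ (F01 x01 x02 x12 x22) (F12 x00 x01 x02 x12) h1) => H.
    by rewrite -H; ring.
apply: (@kernel_of_col _ _ _ _ _ _ (F00 x11 x12 x22) (F01 x01 x02 x12 x22) (F02 x01 x02 x11 x12)).
- by rewrite -hd /det6 /F00 /F01 /F02; ring.
- by rewrite /F00 /F01 /F02; ring.
- by rewrite /F00 /F01 /F02; ring.
- exact: nz.
Qed.

Section Spec2.
Variables x00 x01 x02 x11 x12 x22 e0 e1 e2 : R.
Definition w0 := x00 * e0 + x01 * e1 + x02 * e2.
Definition w1 := x01 * e0 + x11 * e1 + x12 * e2.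
Definition w2 := x02 * e0 + x12 * e1 + x22 * e2.
Definition cc := e0 * w0 + e1 * w1 + e2 * w2.
Definition a0 := 4 * (cc * e0 - w0).
Definition a1 := 4 * (cc * e1 - w1).
Definition a2 := 4 * (cc * e2 - w2).
Definition na := a0 * a0 + a1 * a1 + a2 * a2.

Hypothesis hs : e0 ^+ 2 + e1 ^+ 2 + e2 ^+ 2 = 1.

Lemma I2_path f :
  I26 (x00 + f * sy a0 e0 a0 e0) (x01 + f * sy a0 e1 a1 e0) (x02 + f * sy a0 e2 a2 e0)
      (x11 + f * sy a1 e1 a1 e1) (x12 + f * sy a1 e2 a2 e1) (x22 + f * sy a2 e2 a2 e2)
  = I26 x00 x01 x02 x11 x12 x22 + f * (1 - f) * na / 4.
Proof.
rewrite I2_expand.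
have ae : a0 * e0 + a1 * e1 + a2 * e2 = 4 * cc * ((e0 ^+ 2 + e1 ^+ 2 + e2 ^+ 2) - 1).
  by rewrite /a0 /a1 /a2 /cc /w0 /w1 /w2; ring.
rewrite hs subrr mulr0 in ae.
have IB : I26 (sy a0 e0 a0 e0) (sy a0 e1 a1 e0) (sy a0 e2 a2 e0)
      (sy a1 e1 a1 e1) (sy a1 e2 a2 e1) (sy a2 e2 a2 e2) =
      ((a0 * e0 + a1 * e1 + a2 * e2) ^+ 2 - na * (e0 ^+ 2 + e1 ^+ 2 + e2 ^+ 2)) / 4.
  by rewrite /I26 /sy /na; field.
have MB : mixed x00 x01 x02 x11 x12 x22 (sy a0 e0 a0 e0) (sy a0 e1 a1 e0) (sy a0 e2 a2 e0)
      (sy a1 e1 a1 e1) (sy a1 e2 a2 e1) (sy a2 e2 a2 e2) =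
      (x00 + x11 + x22) * (a0 * e0 + a1 * e1 + a2 * e2) - (a0 * w0 + a1 * w1 + a2 * w2).
  by rewrite /mixed /sy /w0 /w1 /w2; field.
have aw : a0 * w0 + a1 * w1 + a2 * w2 = 4 * (cc ^+ 2 - (w0 ^+ 2 + w1 ^+ 2 + w2 ^+ 2)).
  by rewrite /a0 /a1 /a2 /cc; ring.
have nae : na = 16 * (cc ^+ 2 * (e0 ^+ 2 + e1 ^+ 2 + e2 ^+ 2) - 2 * cc ^+ 2 + (w0 ^+ 2 + w1 ^+ 2 + w2 ^+ 2)).
  by rewrite /na /a0 /a1 /a2 /cc; ring.
rewrite hs in IB nae.
by rewrite IB MB ae aw nae; field.
Qed.

End Spec2.
End Scalar.

Lemma det3 (R : comPzRingType) (M : 'M[R]_3) : \det M =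
  M 0 0 * (M 1 1 * M 2 2 - M 1 2 * M 2 1)
  - M 0 1 * (M 1 0 * M 2 2 - M 1 2 * M 2 0)
  + M 0 2 * (M 1 0 * M 2 1 - M 1 1 * M 2 0).
Proof.
rewrite (expand_det_row _ 0) sum3 /cofactor !(expand_det_row _ 0) !sum2 /cofactor.
rewrite !det_mx11 !mxE /=.
have e1 : lift (0 : 'I_3) (lift (0:'I_2) (0 : 'I_1)) = 2 by apply/val_inj.
have e2 : lift (0 : 'I_3) (lift (1:'I_2) (0 : 'I_1)) = 1 by apply/val_inj.
have e3 : lift (1 : 'I_3) (lift (0:'I_2) (0 : 'I_1)) = 2 by apply/val_inj.
have e4 : lift (1 : 'I_3) (lift (1:'I_2) (0 : 'I_1)) = 0 by apply/val_inj.
have e5 : lift (2 : 'I_3) (lift (0:'I_2) (0 : 'I_1)) = 1 by apply/val_inj.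
have e6 : lift (2 : 'I_3) (lift (1:'I_2) (0 : 'I_1)) = 0 by apply/val_inj.
have e7 : lift (0 : 'I_3) (0:'I_2) = 1 by apply/val_inj.
have e8 : lift (1 : 'I_3) (0:'I_2) = 0 by apply/val_inj.
have e9 : lift (2 : 'I_3) (0:'I_2) = 0 by apply/val_inj.
have e10 : lift (0 : 'I_3) (1:'I_2) = 2 by apply/val_inj.
have e11 : lift (1 : 'I_3) (1:'I_2) = 2 by apply/val_inj.
have e12 : lift (2 : 'I_3) (1:'I_2) = 1 by apply/val_inj.
rewrite e1 e2 e3 e4 e5 e6 e7 e8 e9 e10 e11 e12.
rewrite !modn_small // !addn0 !add0n /= !expr0 !expr1 .
by rewrite -signr_odd /=; ring.
Qed.
Section G.
Variable R : realType.
Lemma tensE n (b m : 'cV[R]_n) i j : tens b m i j = b i 0 * m j 0.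
Proof. by rewrite /tens !mxE big_ord1 !mxE. Qed.
Lemma dotvE (u v : 'cV[R]_3) : dotv u v = u 0 0 * v 0 0 + u 1 0 * v 1 0 + u 2 0 * v 2 0.
Proof. by rewrite /dotv !mxE sum3 !mxE. Qed.
Lemma mulmx3E (A : 'M[R]_3) (v : 'cV[R]_3) i : (A *m v) i 0 = A i 0 * v 0 0 + A i 1 * v 1 0 + A i 2 * v 2 0.
Proof. by rewrite !mxE sum3. Qed.
Lemma cv3P (u v : 'cV[R]_3) : u 0 0 = v 0 0 -> u 1 0 = v 1 0 -> u 2 0 = v 2 0 -> u = v.
Proof.
move=> h0 h1 h2; apply/matrixP => i j; rewrite (ord1 j).
by case: (ord3P i) => ->.
Qed.

Lemma Ehat_eq (E : 'M[R]_3) (e : 'cV[R]_3) : E^T = E ->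
  let Q : 'M[R]_3 := - 1%:M + 2 *: tens e e in
  let a : 'cV[R]_3 := 4 *: (dotv e (E *m e) *: e - E *m e) in
  Q *m E *m Q^T = E + 2^-1 *: (tens a e + tens e a).
Proof.
move=> hE Q a.
have s10 : E 1 0 = E 0 1 by rewrite -[in LHS]hE mxE.
have s20 : E 2 0 = E 0 2 by rewrite -[in LHS]hE mxE.
have s21 : E 2 1 = E 1 2 by rewrite -[in LHS]hE mxE.
have o : (ord0 : 'I_1) = 0 by apply/val_inj.
apply/matrixP => i j.
rewrite /a /Q /dotv !(mxE, sum3, big_ord1).
case: (ord3P i) => ->; case: (ord3P j) => -> /=; by rewrite ?s10 ?s20 ?s21 ?o; field.
Qed.


Lemma symE (S : 'M[R]_3) i j : S^T = S -> S j i = S i j.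
Proof. by move=> h; rewrite -[in LHS]h mxE. Qed.

Lemma det_sym (S : 'M[R]_3) : S^T = S ->
  \det S = det6 (S 0 0) (S 0 1) (S 0 2) (S 1 1) (S 1 2) (S 2 2).
Proof.
move=> h; rewrite det3 (symE 0 1 h) (symE 0 2 h) (symE 1 2 h) /det6; ring.
Qed.

Lemma tr_sym (S : 'M[R]_3) : S^T = S ->
  (\tr S) ^+ 2 - \tr (S *m S) = 2 * I26 (S 0 0) (S 0 1) (S 0 2) (S 1 1) (S 1 2) (S 2 2).
Proof.
move=> h; rewrite /mxtrace !sum3 !mxE !sum3.
rewrite (symE 0 1 h) (symE 0 2 h) (symE 1 2 h) /I26; ring.
Qed.

Lemma det2 (R' : comPzRingType) (M : 'M[R']_2) : \det M = M 0 0 * M 1 1 - M 0 1 * M 1 0.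
Proof.
rewrite (expand_det_row _ 0) sum2 /cofactor !det_mx11 !mxE /=.
have e7 : lift (0 : 'I_2) (0:'I_1) = 1 by apply/val_inj.
have e8 : lift (1 : 'I_2) (0:'I_1) = 0 by apply/val_inj.
rewrite e7 e8 !addn0 /= expr0 expr1; ring.
Qed.

Lemma rank_ge2 (E : 'M[R]_3) (p q : 'I_3) :
  E p p * E q q - E p q * E q p != 0 -> (2 <= \rank E)%N.
Proof.
move=> hpq.
pose f : 'I_2 -> 'I_3 := fun k => if k == 0 then p else q.
have hS : (\rank (mxsub f f E) <= \rank E)%N.
  have -> : mxsub f f E = rowsub f 1%:M *m E *m (rowsub f 1%:M)^T.
    rewrite trmx_mxsub trmx1 mulmx_colsub mulmx1 -rowsubE.
    by apply/matrixP => k l; rewrite !mxE.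
  apply: leq_trans (mxrankM_maxl _ _) _.
  exact: mxrankM_maxr.
apply: leq_trans hS.
by rewrite row_leq_rank row_free_unit unitmxE unitfE det2 !mxE /f /=.
Qed.

Lemma rank_eq2 (E : 'M[R]_3) : E^T = E ->
  det6 (E 0 0) (E 0 1) (E 0 2) (E 1 1) (E 1 2) (E 2 2) = 0 ->
  I26 (E 0 0) (E 0 1) (E 0 2) (E 1 1) (E 1 2) (E 2 2) < 0 -> \rank E = 2%N.
Proof.
move=> h hd hI.
have up : (\rank E < 3)%N.
  rewrite ltnNge row_leq_rank row_free_unit unitmxE unitfE det_sym // hd.
  by rewrite eqxx.
have lo : (2 <= \rank E)%N.
  have [h0|h0] := eqVneq (E 0 0 * E 1 1 - E 0 1 * E 1 0) 0.
    have [h1|h1] := eqVneq (E 0 0 * E 2 2 - E 0 2 * E 2 0) 0.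
      apply: (@rank_ge2 _ 1 2).
      apply: contraTneq hI => H.
      rewrite (symE 0 1 h) in h0; rewrite (symE 0 2 h) in h1; rewrite (symE 1 2 h) in H.
      have -> : I26 (E 0 0) (E 0 1) (E 0 2) (E 1 1) (E 1 2) (E 2 2)
        = (E 0 0 * E 1 1 - E 0 1 * E 0 1) + (E 0 0 * E 2 2 - E 0 2 * E 0 2) + (E 1 1 * E 2 2 - E 1 2 * E 1 2) by rewrite /I26; ring.
      by rewrite h0 h1 H !addr0 ltxx.
    exact: (@rank_ge2 _ 0 2).
  exact: (@rank_ge2 _ 0 1).
by apply/eqP; rewrite eqn_leq lo -ltnS up.
Qed.
Lemma charpoly_sym (E : 'M[R]_3) : E^T = E ->
  char_poly E = 'X^3 - (E 0 0 + E 1 1 + E 2 2)%:P * 'X^2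
    + (I26 (E 0 0) (E 0 1) (E 0 2) (E 1 1) (E 1 2) (E 2 2))%:P * 'X
    - (det6 (E 0 0) (E 0 1) (E 0 2) (E 1 1) (E 1 2) (E 2 2))%:P.
Proof.
move=> h; rewrite /char_poly det3 /char_poly_mx !mxE /=.
rewrite (symE 0 1 h) (symE 0 2 h) (symE 1 2 h) /I26 /det6.
rewrite !(polyCD, polyCM, polyCN, polyCB); ring.
Qed.

Lemma middle_fwd (E : 'M[R]_3) : E^T = E -> middle_eigenvalue E 0 ->
  det6 (E 0 0) (E 0 1) (E 0 2) (E 1 1) (E 1 2) (E 2 2) = 0.
Proof.
move=> h [e1 [e3 [_ H]]].
have := congr1 (fun p => p.[0]) H; rewrite charpoly_sym //=.
rewrite !hornerD !hornerN !hornerM !hornerC !hornerX !hornerXsubC; lra.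
Qed.

Lemma middle_bwd (E : 'M[R]_3) : E^T = E ->
  det6 (E 0 0) (E 0 1) (E 0 2) (E 1 1) (E 1 2) (E 2 2) = 0 ->
  I26 (E 0 0) (E 0 1) (E 0 2) (E 1 1) (E 1 2) (E 2 2) <= 0 ->
  middle_eigenvalue E 0.
Proof.
move=> h.
set t := E 0 0 + E 1 1 + E 2 2.
set I := I26 (E 0 0) (E 0 1) (E 0 2) (E 1 1) (E 1 2) (E 2 2).
move=> hd hI.
set D := t ^+ 2 - 4 * I.
have D0 : 0 <= D by rewrite /D; have := sqr_ge0 t; lra.
have tD : `|t| <= Num.sqrt D.
  rewrite -sqrtr_sqr ler_sqrt //; rewrite /D; lra.
exists ((t - Num.sqrt D) / 2), ((t + Num.sqrt D) / 2); split.
  apply/andP; split.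
    have : t <= Num.sqrt D by apply: le_trans tD; exact: ler_norm.
    lra.
  have : - t <= Num.sqrt D by apply: le_trans tD; rewrite -normrN; exact: ler_norm.
  lra.
rewrite charpoly_sym // -/t -/I hd.
have hs : Num.sqrt D ^+ 2 = D by rewrite sqr_sqrtr.
have -> : I = (t - Num.sqrt D) / 2 * ((t + Num.sqrt D) / 2).
  rewrite [RHS](_ : _ = (t ^+ 2 - Num.sqrt D ^+ 2) / 4); last by field.
  by rewrite hs /D; field.
set u := (t - Num.sqrt D) / 2; set v := (t + Num.sqrt D) / 2.
have ht : t = u + v by rewrite /u /v; field.
rewrite ht !(polyCD, polyCM, polyCN, polyCB) polyC0; ring.
Qed.
Definition vec3 (x y z : R) : 'cV[R]_3 :=
  \col_(i < 3) (match val i with 0 => x | 1 => y | _ => z end).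
Lemma vec3E0 x y z : vec3 x y z 0 0 = x. Proof. by rewrite mxE. Qed.
Lemma vec3E1 x y z : vec3 x y z 1 0 = y. Proof. by rewrite mxE. Qed.
Lemma vec3E2 x y z : vec3 x y z 2 0 = z. Proof. by rewrite mxE. Qed.

Lemma symform (S : 'M[R]_3) : S^T = S ->
  (exists b m : 'cV[R]_3, S = 2^-1 *: (tens b m + tens m b)) <->
  (det6 (S 0 0) (S 0 1) (S 0 2) (S 1 1) (S 1 2) (S 2 2) = 0 /\
   I26 (S 0 0) (S 0 1) (S 0 2) (S 1 1) (S 1 2) (S 2 2) <= 0).
Proof.
move=> h; split.
  move=> [b [m hS]].
  have hE : forall i j, S i j = sy (b i 0) (m j 0) (b j 0) (m i 0).
    by move=> i j; rewrite hS !(mxE, big_ord1) /sy; field.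
  rewrite !hE; split; [exact: sym_det | exact: sym_I2_le].
move=> [hd hI].
have [b0 [b1 [b2 [m0 [m1 [m2 [E0 [E1 [E2 [E3 [E4 E5]]]]]]]]]]] := factor hd hI.
exists (vec3 b0 b1 b2), (vec3 m0 m1 m2).
apply/matrixP => i j.
rewrite !(mxE, big_ord1).
have s10 := symE 0 1 h; have s20 := symE 0 2 h; have s21 := symE 1 2 h.
case: (ord3P i) => ->; case: (ord3P j) => ->;
  by rewrite /= ?s10 ?s20 ?s21 ?E0 ?E1 ?E2 ?E3 ?E4 ?E5 /sy; field.
Qed.

Lemma QQT (e : 'cV[R]_3) : dotv e e = 1 ->
  let Q : 'M[R]_3 := - 1%:M + 2 *: tens e e in Q *m Q^T = 1%:M.
Proof.
move=> he Q.
rewrite dotvE in he.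
have h0 : e 0 0 ^+ 2 = 1 - e 1 0 ^+ 2 - e 2 0 ^+ 2 by rewrite -he; ring.
have o : (ord0 : 'I_1) = 0 by apply/val_inj.
apply/matrixP => i j; rewrite /Q !(mxE, sum3, big_ord1).
by case: (ord3P i) => ->; case: (ord3P j) => -> /=; rewrite ?o; ring: h0.
Qed.

Lemma det_Ehat (E : 'M[R]_3) (e : 'cV[R]_3) : dotv e e = 1 ->
  let Q : 'M[R]_3 := - 1%:M + 2 *: tens e e in \det (Q *m E *m Q^T) = \det E.
Proof.
move=> he Q.
by rewrite !det_mulmx mulrAC -det_mulmx (QQT he) det1 mul1r.
Qed.
End G.
Lemma I26_scale (R : realType) (m00 m01 m02 m11 m12 m22 : R) :
  I26 (2 * m00) (2 * m01) (2 * m02) (2 * m11) (2 * m12) (2 * m22) = 4 * I26 m00 m01 m02 m11 m12 m22.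
Proof. rewrite /I26; ring. Qed.
Lemma det_Ehat' (R : realType) (E : 'M[R]_3) (e : 'cV[R]_3) : dotv e e = 1 ->
  \det ((- 1%:M + 2 *: tens e e) *m E *m (- 1%:M + 2 *: tens e e)^T) = \det E.
Proof. move=> he; exact: (det_Ehat E he). Qed.

Unset Implicit Arguments. Set Strict Implicit.

Theorem theorem4 (R : realType) (E : 'M[R]_3) (e : 'cV[R]_3) :
  E^T = E ->
  dotv e e = 1 ->
  let Q : 'M[R]_3 := - 1%:M + 2 *: tens e e in
  let Ehat : 'M[R]_3 := Q *m E *m Q^T in
  Ehat != E ->
  let a : 'cV[R]_3 := 4 *: (dotv e (E *m e) *: e - E *m e) in
  let n : 'cV[R]_3 := e in
  (forall f : R, 0 <= f <= 1 ->
     exists b m : 'cV[R]_3,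
       f *: Ehat + (1 - f) *: E = 2^-1 *: (tens b m + tens m b))
  <->
  [/\ (middle_eigenvalue E 0 /\ \rank E = 2%N),
      (forall v2 : 'cV[R]_3, E *m v2 = 0 -> dotv v2 v2 = 1 ->
          dotv a v2 * dotv n v2 = 0)
    & (\tr (E + Ehat)) ^+ 2 - \tr ((E + Ehat) *m (E + Ehat)) <= 0].
Proof.
move=> hE he Q Ehat hne a n.
have hEh : Ehat = E + 2^-1 *: (tens a e + tens e a) := Ehat_eq e hE.
have s10 := symE 0 1 hE; have s20 := symE 0 2 hE; have s21 := symE 1 2 hE.
have hs : e 0 0 ^+ 2 + e 1 0 ^+ 2 + e 2 0 ^+ 2 = 1 by rewrite -he dotvE; ring.
have haE : forall i, a i 0 = 4 * ((e 0 0 * (E 0 0 * e 0 0 + E 0 1 * e 1 0 + E 0 2 * e 2 0)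
      + e 1 0 * (E 0 1 * e 0 0 + E 1 1 * e 1 0 + E 1 2 * e 2 0)
      + e 2 0 * (E 0 2 * e 0 0 + E 1 2 * e 1 0 + E 2 2 * e 2 0)) * e i 0
      - (E i 0 * e 0 0 + E i 1 * e 1 0 + E i 2 * e 2 0)).
  by move=> i; rewrite /a !mxE dotvE !mulmx3E sum3 ?s10 ?s20 ?s21.
have ha0 : a 0 0 = (a0 (E 0 0) (E 0 1) (E 0 2) (E 1 1) (E 1 2) (E 2 2) (e 0 0) (e 1 0) (e 2 0)) by rewrite haE /a0 /cc /w0 /w1 /w2.
have ha1 : a 1 0 = (a1 (E 0 0) (E 0 1) (E 0 2) (E 1 1) (E 1 2) (E 2 2) (e 0 0) (e 1 0) (e 2 0)) by rewrite haE s10 /a1 /cc /w0 /w1 /w2.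
have ha2 : a 2 0 = (a2 (E 0 0) (E 0 1) (E 0 2) (E 1 1) (E 1 2) (E 2 2) (e 0 0) (e 1 0) (e 2 0)) by rewrite haE s20 s21 /a2 /cc /w0 /w1 /w2.
have hEf : forall f i j, (f *: Ehat + (1 - f) *: E) i j =
    E i j + f * sy (a i 0) (e j 0) (a j 0) (e i 0).
  by move=> f i j; rewrite hEh !(mxE, big_ord1) /sy; field.
have hEsym : forall f, (f *: Ehat + (1 - f) *: E)^T = f *: Ehat + (1 - f) *: E.
  by move=> f; apply/matrixP => i j; rewrite mxE !hEf (symE i j hE) /sy; field.
pose DET := fun f => det6 (E 0 0 + f * sy (a0 (E 0 0) (E 0 1) (E 0 2) (E 1 1) (E 1 2) (E 2 2) (e 0 0) (e 1 0) (e 2 0)) (e 0 0) (a0 (E 0 0) (E 0 1) (E 0 2) (E 1 1) (E 1 2) (E 2 2) (e 0 0) (e 1 0) (e 2 0)) (e 0 0)) (E 0 1 + f * sy (a0 (E 0 0) (E 0 1) (E 0 2) (E 1 1) (E 1 2) (E 2 2) (e 0 0) (e 1 0) (e 2 0)) (e 1 0) (a1 (E 0 0) (E 0 1) (E 0 2) (E 1 1) (E 1 2) (E 2 2) (e 0 0) (e 1 0) (e 2 0)) (e 0 0)) (E 0 2 + f * sy (a0 (E 0 0) (E 0 1) (E 0 2) (E 1 1) (E 1 2) (E 2 2) (e 0 0) (e 1 0) (e 2 0)) (e 2 0) (a2 (E 0 0) (E 0 1) (E 0 2) (E 1 1) (E 1 2) (E 2 2) (e 0 0) (e 1 0) (e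 2 0)) (e 0 0)) (E 1 1 + f * sy (a1 (E 0 0) (E 0 1) (E 0 2) (E 1 1) (E 1 2) (E 2 2) (e 0 0) (e 1 0) (e 2 0)) (e 1 0) (a1 (E 0 0) (E 0 1) (E 0 2) (E 1 1) (E 1 2) (E 2 2) (e 0 0) (e 1 0) (e 2 0)) (e 1 0)) (E 1 2 + f * sy (a1 (E 0 0) (E 0 1) (E 0 2) (E 1 1) (E 1 2) (E 2 2) (e 0 0) (e 1 0) (e 2 0)) (e 2 0) (a2 (E 0 0) (E 0 1) (E 0 2) (E 1 1) (E 1 2) (E 2 2) (e 0 0) (e 1 0) (e 2 0)) (e 1 0)) (E 2 2 + f * sy (a2 (E 0 0) (E 0 1) (E 0 2) (E 1 1) (E 1 2) (E 2 2) (e 0 0) (e 1 0) (e 2 0)) (e 2 0) (a2 (E 0 0) (E 0 1) (E 0 2) (E 1 1) (E 1 2) (E 2 2) (e 0 0) (e 1 0) (e 2 0)) (e 2 0)).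
pose I2F := fun f => I26 (E 0 0 + f * sy (a0 (E 0 0) (E 0 1) (E 0 2) (E 1 1) (E 1 2) (E 2 2) (e 0 0) (e 1 0) (e 2 0)) (e 0 0) (a0 (E 0 0) (E 0 1) (E 0 2) (E 1 1) (E 1 2) (E 2 2) (e 0 0) (e 1 0) (e 2 0)) (e 0 0)) (E 0 1 + f * sy (a0 (E 0 0) (E 0 1) (E 0 2) (E 1 1) (E 1 2) (E 2 2) (e 0 0) (e 1 0) (e 2 0)) (e 1 0) (a1 (E 0 0) (E 0 1) (E 0 2) (E 1 1) (E 1 2) (E 2 2) (e 0 0) (e 1 0) (e 2 0)) (e 0 0)) (E 0 2 + f * sy (a0 (E 0 0) (E 0 1) (E 0 2) (E 1 1) (E 1 2) (E 2 2) (e 0 0) (e 1 0) (e 2 0)) (e 2 0) (a2 (E 0 0) (E 0 1) (E 0 2) (E 1 1) (E 1 2) (E 2 2) (e 0 0) (e 1 0) (e 2 0)) (e 0 0)) (E 1 1 + f * sy (a1 (E 0 0) (E 0 1) (E 0 2) (E 1 1) (E 1 2) (E 2 2) (e 0 0) (e 1 0) (e 2 0)) (e 1 0) (a1 (E 0 0) (E 0 1) (E 0 2) (E 1 1) (E 1 2) (E 2 2) (e 0 0) (e 1 0) (e 2 0)) (e 1 0)) (E 1 2 + f * sy (a1 (E 0 0) (E 0 1) (E 0 2) (E 1 1) (E 1 2) (E 2 2) (e 0 0) (e 1 0) (e 2 0)) (e 2 0) (a2 (E 0 0) (E 0 1) (E 0 2) (E 1 1) (E 1 2) (E 2 2) (e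 0 0) (e 1 0) (e 2 0)) (e 1 0)) (E 2 2 + f * sy (a2 (E 0 0) (E 0 1) (E 0 2) (E 1 1) (E 1 2) (E 2 2) (e 0 0) (e 1 0) (e 2 0)) (e 2 0) (a2 (E 0 0) (E 0 1) (E 0 2) (E 1 1) (E 1 2) (E 2 2) (e 0 0) (e 1 0) (e 2 0)) (e 2 0)).
have key : (forall f : R, 0 <= f <= 1 -> exists b m : 'cV[R]_3,
       f *: Ehat + (1 - f) *: E = 2^-1 *: (tens b m + tens m b))
   <-> (forall f : R, 0 <= f <= 1 -> DET f = 0 /\ I2F f <= 0).
  split => H f hf.
    by have := (symform (hEsym f)).1 (H f hf); rewrite !hEf ha0 ha1 ha2.
  by apply: (symform (hEsym f)).2; rewrite !hEf ha0 ha1 ha2; exact: H.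
rewrite key.
have P1 : forall f, DET f = (det6 (E 0 0) (E 0 1) (E 0 2) (E 1 1) (E 1 2) (E 2 2)) + f * (qF (E 0 0) (E 0 1) (E 0 2) (E 1 1) (E 1 2) (E 2 2) (a0 (E 0 0) (E 0 1) (E 0 2) (E 1 1) (E 1 2) (E 2 2) (e 0 0) (e 1 0) (e 2 0)) (a1 (E 0 0) (E 0 1) (E 0 2) (E 1 1) (E 1 2) (E 2 2) (e 0 0) (e 1 0) (e 2 0)) (a2 (E 0 0) (E 0 1) (E 0 2) (E 1 1) (E 1 2) (E 2 2) (e 0 0) (e 1 0) (e 2 0)) (e 0 0) (e 1 0) (e 2 0)) + f ^+ 2 * (adjsum (sy (a0 (E 0 0) (E 0 1) (E 0 2) (E 1 1) (E 1 2) (E 2 2) (e 0 0) (e 1 0) (e 2 0)) (e 0 0) (a0 (E 0 0) (E 0 1) (E 0 2) (E 1 1) (E 1 2) (E 2 2) (e 0 0) (e 1 0) (e 2 0)) (e 0 0)) (sy (a0 (E 0 0) (E 0 1) (E 0 2) (E 1 1) (E 1 2) (E 2 2) (e 0 0) (e 1 0) (e 2 0)) (e 1 0) (a1 (E 0 0) (E 0 1) (E 0 2) (E 1 1) (E 1 2) (E 2 2) (e 0 0) (e 1 0) (e 2 0)) (e 0 0)) (sy (a0 (E 0 0) (E 0 1) (E 0 2) (E 1 1) (E 1 2) (E 2 2) (e 0 0) (e 1 0) (e 2 0)) (e 2 0) (a2 (E 0 0) (E 0 1) (E 0 2) (E 1 1) (E 1 2) (E 2 2) (e 0 0) (e 1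 0) (e 2 0)) (e 0 0)) (sy (a1 (E 0 0) (E 0 1) (E 0 2) (E 1 1) (E 1 2) (E 2 2) (e 0 0) (e 1 0) (e 2 0)) (e 1 0) (a1 (E 0 0) (E 0 1) (E 0 2) (E 1 1) (E 1 2) (E 2 2) (e 0 0) (e 1 0) (e 2 0)) (e 1 0)) (sy (a1 (E 0 0) (E 0 1) (E 0 2) (E 1 1) (E 1 2) (E 2 2) (e 0 0) (e 1 0) (e 2 0)) (e 2 0) (a2 (E 0 0) (E 0 1) (E 0 2) (E 1 1) (E 1 2) (E 2 2) (e 0 0) (e 1 0) (e 2 0)) (e 1 0)) (sy (a2 (E 0 0) (E 0 1) (E 0 2) (E 1 1) (E 1 2) (E 2 2) (e 0 0) (e 1 0) (e 2 0)) (e 2 0) (a2 (E 0 0) (E 0 1) (E 0 2) (E 1 1) (E 1 2) (E 2 2) (e 0 0) (e 1 0) (e 2 0)) (e 2 0)) (E 0 0) (E 0 1) (E 0 2) (E 1 1) (E 1 2) (E 2 2)).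
  by move=> f; rewrite /DET det_expand sym_det adjsum_qF mulr0 addr0.
have P2 : forall f, I2F f = (I26 (E 0 0) (E 0 1) (E 0 2) (E 1 1) (E 1 2) (E 2 2)) + f * (1 - f) * (na (E 0 0) (E 0 1) (E 0 2) (E 1 1) (E 1 2) (E 2 2) (e 0 0) (e 1 0) (e 2 0)) / 4.
  by move=> f; rewrite /I2F I2_path.
have naP : 0 < (na (E 0 0) (E 0 1) (E 0 2) (E 1 1) (E 1 2) (E 2 2) (e 0 0) (e 1 0) (e 2 0)).
  have na0 : 0 <= (na (E 0 0) (E 0 1) (E 0 2) (E 1 1) (E 1 2) (E 2 2) (e 0 0) (e 1 0) (e 2 0)).
    by rewrite /na !addr_ge0 // -expr2 sqr_ge0.
  rewrite lt_neqAle na0 andbT eq_sym; apply: contra hne => /eqP hz.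
  have hz' : (a0 (E 0 0) (E 0 1) (E 0 2) (E 1 1) (E 1 2) (E 2 2) (e 0 0) (e 1 0) (e 2 0)) ^+ 2 + (a1 (E 0 0) (E 0 1) (E 0 2) (E 1 1) (E 1 2) (E 2 2) (e 0 0) (e 1 0) (e 2 0)) ^+ 2 + (a2 (E 0 0) (E 0 1) (E 0 2) (E 1 1) (E 1 2) (E 2 2) (e 0 0) (e 1 0) (e 2 0)) ^+ 2 = 0 by rewrite -hz /na; ring.
  have q0 := sqr_ge0 (a0 (E 0 0) (E 0 1) (E 0 2) (E 1 1) (E 1 2) (E 2 2) (e 0 0) (e 1 0) (e 2 0)); have q1 := sqr_ge0 (a1 (E 0 0) (E 0 1) (E 0 2) (E 1 1) (E 1 2) (E 2 2) (e 0 0) (e 1 0) (e 2 0)); have q2 := sqr_ge0 (a2 (E 0 0) (E 0 1) (E 0 2) (E 1 1) (E 1 2) (E 2 2) (e 0 0) (e 1 0) (e 2 0)).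
  have z0 : (a0 (E 0 0) (E 0 1) (E 0 2) (E 1 1) (E 1 2) (E 2 2) (e 0 0) (e 1 0) (e 2 0)) = 0 by apply/eqP; rewrite -sqrf_eq0; apply/eqP; lra.
  have z1 : (a1 (E 0 0) (E 0 1) (E 0 2) (E 1 1) (E 1 2) (E 2 2) (e 0 0) (e 1 0) (e 2 0)) = 0 by apply/eqP; rewrite -sqrf_eq0; apply/eqP; lra.
  have z2 : (a2 (E 0 0) (E 0 1) (E 0 2) (E 1 1) (E 1 2) (E 2 2) (e 0 0) (e 1 0) (e 2 0)) = 0 by apply/eqP; rewrite -sqrf_eq0; apply/eqP; lra.
  have az : a = 0 by apply: cv3P; [rewrite ha0 z0 | rewrite ha1 z1 | rewrite ha2 z2]; rewrite mxE.
  by rewrite hEh az /tens mul0mx trmx0 mulmx0 addr0 scaler0 addr0.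
have hM : (E + Ehat)^T = E + Ehat.
  by rewrite hEh; apply/matrixP => i j; rewrite !(mxE, big_ord1) (symE i j hE); field.
have hC3 : (\tr (E + Ehat)) ^+ 2 - \tr ((E + Ehat) *m (E + Ehat)) = 8 * ((I26 (E 0 0) (E 0 1) (E 0 2) (E 1 1) (E 1 2) (E 2 2)) + (na (E 0 0) (E 0 1) (E 0 2) (E 1 1) (E 1 2) (E 2 2) (e 0 0) (e 1 0) (e 2 0)) / 16).
  rewrite tr_sym //.
  have eM : forall i j, (E + Ehat) i j = 2 * (E i j + 2^-1 * sy (a i 0) (e j 0) (a j 0) (e i 0)).
    by move=> i j; rewrite hEh !(mxE, big_ord1) /sy; field.
  rewrite !eM ha0 ha1 ha2 I26_scale.
  have := P2 (2^-1); rewrite /I2F => ->.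
  by field.
split.
  move=> H.
  have [Hd0 _] : DET 0 = 0 /\ I2F 0 <= 0 by apply: H; rewrite lexx ler01.
  have [Hd1 _] : DET 1 = 0 /\ I2F 1 <= 0 by apply: H; rewrite lexx ler01.
  have [Hdh Hih] : DET 2^-1 = 0 /\ I2F 2^-1 <= 0.
    by apply: H; rewrite invr_ge0 ler0n /= invf_le1 ?ltr0n // ler1n.
  rewrite P1 in Hd0; rewrite P1 in Hd1; rewrite P1 in Hdh.
  rewrite P2 in Hih.
  have hd0 : (det6 (E 0 0) (E 0 1) (E 0 2) (E 1 1) (E 1 2) (E 2 2)) = 0 by move: Hd0; rewrite mul0r expr0n /= mul0r !addr0.
  have hD1 : (qF (E 0 0) (E 0 1) (E 0 2) (E 1 1) (E 1 2) (E 2 2) (a0 (E 0 0) (E 0 1) (E 0 2) (E 1 1) (E 1 2) (E 2 2) (e 0 0) (e 1 0) (e 2 0)) (a1 (E 0 0) (E 0 1) (E 0 2) (E 1 1) (E 1 2) (E 2 2) (e 0 0) (e 1 0) (e 2 0)) (a2 (E 0 0) (E 0 1) (E 0 2) (E 1 1) (E 1 2) (E 2 2) (e 0 0) (e 1 0) (e 2 0)) (e 0 0) (e 1 0) (e 2 0)) = 0.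
    move: Hd1 Hdh; rewrite hd0 mul1r expr1n mul1r !add0r => Hd1 Hdh.
    rewrite (_ : (qF (E 0 0) (E 0 1) (E 0 2) (E 1 1) (E 1 2) (E 2 2) (a0 (E 0 0) (E 0 1) (E 0 2) (E 1 1) (E 1 2) (E 2 2) (e 0 0) (e 1 0) (e 2 0)) (a1 (E 0 0) (E 0 1) (E 0 2) (E 1 1) (E 1 2) (E 2 2) (e 0 0) (e 1 0) (e 2 0)) (a2 (E 0 0) (E 0 1) (E 0 2) (E 1 1) (E 1 2) (E 2 2) (e 0 0) (e 1 0) (e 2 0)) (e 0 0) (e 1 0) (e 2 0)) = 4 * (2^-1 * (qF (E 0 0) (E 0 1) (E 0 2) (E 1 1) (E 1 2) (E 2 2) (a0 (E 0 0) (E 0 1) (E 0 2) (E 1 1) (E 1 2) (E 2 2) (e 0 0) (e 1 0) (e 2 0)) (a1 (E 0 0) (E 0 1) (E 0 2) (E 1 1) (E 1 2) (E 2 2) (e 0 0) (e 1 0) (e 2 0)) (a2 (E 0 0) (E 0 1) (E 0 2) (E 1 1) (E 1 2) (E 2 2) (e 0 0) (e 1 0) (e 2 0)) (e 0 0) (e 1 0) (e 2 0)) + 2^-1 ^+ 2 * (adjsum (sy (a0 (E 0 0) (E 0 1) (E 0 2) (E 1 1) (E 1 2) (E 2 2) (e 0 0) (e 1 0) (e 2 0)) (e 0 0) (a0 (E 0 0) (E 0 1) (E 0 2) (E 1 1) (E 1 2) (E 2 2) (e 0 0) (e 1 0) (e 2 0)) (e 0 0)) (sy (a0 (E 0 0)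 (E 0 1) (E 0 2) (E 1 1) (E 1 2) (E 2 2) (e 0 0) (e 1 0) (e 2 0)) (e 1 0) (a1 (E 0 0) (E 0 1) (E 0 2) (E 1 1) (E 1 2) (E 2 2) (e 0 0) (e 1 0) (e 2 0)) (e 0 0)) (sy (a0 (E 0 0) (E 0 1) (E 0 2) (E 1 1) (E 1 2) (E 2 2) (e 0 0) (e 1 0) (e 2 0)) (e 2 0) (a2 (E 0 0) (E 0 1) (E 0 2) (E 1 1) (E 1 2) (E 2 2) (e 0 0) (e 1 0) (e 2 0)) (e 0 0)) (sy (a1 (E 0 0) (E 0 1) (E 0 2) (E 1 1) (E 1 2) (E 2 2) (e 0 0) (e 1 0) (e 2 0)) (e 1 0) (a1 (E 0 0) (E 0 1) (E 0 2) (E 1 1) (E 1 2) (E 2 2) (e 0 0) (e 1 0) (e 2 0)) (e 1 0)) (sy (a1 (E 0 0) (E 0 1) (E 0 2) (E 1 1) (E 1 2) (E 2 2) (e 0 0) (e 1 0) (e 2 0)) (e 2 0) (a2 (E 0 0) (E 0 1) (E 0 2) (E 1 1) (E 1 2) (E 2 2) (e 0 0) (e 1 0) (e 2 0)) (e 1 0)) (sy (a2 (E 0 0) (E 0 1) (E 0 2) (E 1 1) (E 1 2) (E 2 2) (e 0 0) (e 1 0) (e 2 0)) (e 2 0) (a2 (E 0 0) (E 0 1) (E 0 2) (E 1 1) (E 1 2) (E 2 2) (e 0 0) (e 1 0) (e 2 0)) (e 2 0)) (E 0 0) (E 0 1) (E 0 2) (E 1 1) (E 1 2) (E 2 2)))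 - ((qF (E 0 0) (E 0 1) (E 0 2) (E 1 1) (E 1 2) (E 2 2) (a0 (E 0 0) (E 0 1) (E 0 2) (E 1 1) (E 1 2) (E 2 2) (e 0 0) (e 1 0) (e 2 0)) (a1 (E 0 0) (E 0 1) (E 0 2) (E 1 1) (E 1 2) (E 2 2) (e 0 0) (e 1 0) (e 2 0)) (a2 (E 0 0) (E 0 1) (E 0 2) (E 1 1) (E 1 2) (E 2 2) (e 0 0) (e 1 0) (e 2 0)) (e 0 0) (e 1 0) (e 2 0)) + (adjsum (sy (a0 (E 0 0) (E 0 1) (E 0 2) (E 1 1) (E 1 2) (E 2 2) (e 0 0) (e 1 0) (e 2 0)) (e 0 0) (a0 (E 0 0) (E 0 1) (E 0 2) (E 1 1) (E 1 2) (E 2 2) (e 0 0) (e 1 0) (e 2 0)) (e 0 0)) (sy (a0 (E 0 0) (E 0 1) (E 0 2) (E 1 1) (E 1 2) (E 2 2) (e 0 0) (e 1 0) (e 2 0)) (e 1 0) (a1 (E 0 0) (E 0 1) (E 0 2) (E 1 1) (E 1 2) (E 2 2) (e 0 0) (e 1 0) (e 2 0)) (e 0 0)) (sy (a0 (E 0 0) (E 0 1) (E 0 2) (E 1 1) (E 1 2) (E 2 2) (e 0 0) (e 1 0) (e 2 0)) (e 2 0) (a2 (E 0 0) (E 0 1) (E 0 2) (E 1 1) (E 1 2) (E 2 2) (e 0 0) (e 1 0) (e 2 0)) (e 0 0)) (sy (a1 (E 0 0) (E 0 1) (E 0 2) (E 1 1) (E 1 2) (E 2 2) (e 0 0) (e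 1 0) (e 2 0)) (e 1 0) (a1 (E 0 0) (E 0 1) (E 0 2) (E 1 1) (E 1 2) (E 2 2) (e 0 0) (e 1 0) (e 2 0)) (e 1 0)) (sy (a1 (E 0 0) (E 0 1) (E 0 2) (E 1 1) (E 1 2) (E 2 2) (e 0 0) (e 1 0) (e 2 0)) (e 2 0) (a2 (E 0 0) (E 0 1) (E 0 2) (E 1 1) (E 1 2) (E 2 2) (e 0 0) (e 1 0) (e 2 0)) (e 1 0)) (sy (a2 (E 0 0) (E 0 1) (E 0 2) (E 1 1) (E 1 2) (E 2 2) (e 0 0) (e 1 0) (e 2 0)) (e 2 0) (a2 (E 0 0) (E 0 1) (E 0 2) (E 1 1) (E 1 2) (E 2 2) (e 0 0) (e 1 0) (e 2 0)) (e 2 0)) (E 0 0) (E 0 1) (E 0 2) (E 1 1) (E 1 2) (E 2 2)))); last by field.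
    by rewrite Hdh Hd1; ring.
  have hI0 : (I26 (E 0 0) (E 0 1) (E 0 2) (E 1 1) (E 1 2) (E 2 2)) + (na (E 0 0) (E 0 1) (E 0 2) (E 1 1) (E 1 2) (E 2 2) (e 0 0) (e 1 0) (e 2 0)) / 16 <= 0.
    by move: Hih; rewrite (_ : 2^-1 * (1 - 2^-1) * (na (E 0 0) (E 0 1) (E 0 2) (E 1 1) (E 1 2) (E 2 2) (e 0 0) (e 1 0) (e 2 0)) / 4 = (na (E 0 0) (E 0 1) (E 0 2) (E 1 1) (E 1 2) (E 2 2) (e 0 0) (e 1 0) (e 2 0)) / 16) //; field.
  have hIneg : (I26 (E 0 0) (E 0 1) (E 0 2) (E 1 1) (E 1 2) (E 2 2)) < 0 by lra.
  split.
  - split; first by apply: middle_bwd => //; exact: ltW.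
    exact: rank_eq2.
  - move=> v hv hv1.
    have k0 : E 0 0 * v 0 0 + E 0 1 * v 1 0 + E 0 2 * v 2 0 = 0.
      by rewrite -mulmx3E hv mxE.
    have k1 : E 0 1 * v 0 0 + E 1 1 * v 1 0 + E 1 2 * v 2 0 = 0.
      by rewrite -s10 -mulmx3E hv mxE.
    have k2 : E 0 2 * v 0 0 + E 1 2 * v 1 0 + E 2 2 * v 2 0 = 0.
      by rewrite -s20 -s21 -mulmx3E hv mxE.
    have hv1' : v 0 0 * v 0 0 + v 1 0 * v 1 0 + v 2 0 * v 2 0 = 1 by rewrite -dotvE.
    have := vlemma hd0 k0 k1 k2 hv1' (ltr0_neq0 hIneg) (a0 (E 0 0) (E 0 1) (E 0 2) (E 1 1) (E 1 2) (E 2 2) (e 0 0) (e 1 0) (e 2 0)) (a1 (E 0 0) (E 0 1) (E 0 2) (E 1 1) (E 1 2) (E 2 2) (e 0 0) (e 1 0) (e 2 0)) (a2 (E 0 0) (E 0 1) (E 0 2) (E 1 1) (E 1 2) (E 2 2) (e 0 0) (e 1 0) (e 2 0)) (e 0 0) (e 1 0) (e 2 0).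
    rewrite hD1 => hq.
    rewrite /n !dotvE ha0 ha1 ha2.
    move/esym: hq; rewrite -mulrA => /eqP; rewrite mulf_eq0 (negPf (ltr0_neq0 hIneg)) /= => /eqP Hf.
    exact: Hf.
  - by rewrite hC3; lra.
move=> [[hm hr] hc2 hc3] f hf.
have hd0 : (det6 (E 0 0) (E 0 1) (E 0 2) (E 1 1) (E 1 2) (E 2 2)) = 0 := middle_fwd hE hm.
have hI0 : (I26 (E 0 0) (E 0 1) (E 0 2) (E 1 1) (E 1 2) (E 2 2)) + (na (E 0 0) (E 0 1) (E 0 2) (E 1 1) (E 1 2) (E 2 2) (e 0 0) (e 1 0) (e 2 0)) / 16 <= 0 by move: hc3; rewrite hC3; lra.
have hIneg : (I26 (E 0 0) (E 0 1) (E 0 2) (E 1 1) (E 1 2) (E 2 2)) < 0 by lra.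
have [v0 [v1 [v2 [k0 k1 k2 hv]]]] := kernel_exists hd0 (ltr0_neq0 hIneg).
pose V := vec3 v0 v1 v2.
have hV : E *m V = 0.
  apply: cv3P; rewrite mulmx3E !(vec3E0, vec3E1, vec3E2) mxE ?s10 ?s20 ?s21;
    first [exact: k0 | exact: k1 | exact: k2].
have hV1 : dotv V V = 1 by rewrite dotvE !(vec3E0, vec3E1, vec3E2).
have := hc2 V hV hV1; rewrite /n !dotvE ha0 ha1 ha2 !(vec3E0, vec3E1, vec3E2) => hprod.
have hD1 : (qF (E 0 0) (E 0 1) (E 0 2) (E 1 1) (E 1 2) (E 2 2) (a0 (E 0 0) (E 0 1) (E 0 2) (E 1 1) (E 1 2) (E 2 2) (e 0 0) (e 1 0) (e 2 0)) (a1 (E 0 0) (E 0 1) (E 0 2) (E 1 1) (E 1 2) (E 2 2) (e 0 0) (e 1 0) (e 2 0)) (a2 (E 0 0) (E 0 1) (E 0 2) (E 1 1) (E 1 2) (E 2 2) (e 0 0) (e 1 0) (e 2 0)) (e 0 0) (e 1 0) (e 2 0)) = 0 by rewrite (vlemma hd0 k0 k1 k2 hv (ltr0_neq0 hIneg)) -mulrA hprod mulr0.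
have hD2 : (adjsum (sy (a0 (E 0 0) (E 0 1) (E 0 2) (E 1 1) (E 1 2) (E 2 2) (e 0 0) (e 1 0) (e 2 0)) (e 0 0) (a0 (E 0 0) (E 0 1) (E 0 2) (E 1 1) (E 1 2) (E 2 2) (e 0 0) (e 1 0) (e 2 0)) (e 0 0)) (sy (a0 (E 0 0) (E 0 1) (E 0 2) (E 1 1) (E 1 2) (E 2 2) (e 0 0) (e 1 0) (e 2 0)) (e 1 0) (a1 (E 0 0) (E 0 1) (E 0 2) (E 1 1) (E 1 2) (E 2 2) (e 0 0) (e 1 0) (e 2 0)) (e 0 0)) (sy (a0 (E 0 0) (E 0 1) (E 0 2) (E 1 1) (E 1 2) (E 2 2) (e 0 0) (e 1 0) (e 2 0)) (e 2 0) (a2 (E 0 0) (E 0 1) (E 0 2) (E 1 1) (E 1 2) (E 2 2) (e 0 0) (e 1 0) (e 2 0)) (e 0 0)) (sy (a1 (E 0 0) (E 0 1) (E 0 2) (E 1 1) (E 1 2) (E 2 2) (e 0 0) (e 1 0) (e 2 0)) (e 1 0) (a1 (E 0 0) (E 0 1) (E 0 2) (E 1 1) (E 1 2) (E 2 2) (e 0 0) (e 1 0) (e 2 0)) (e 1 0)) (sy (a1 (E 0 0) (E 0 1) (E 0 2) (E 1 1) (E 1 2) (E 2 2) (e 0 0) (e 1 0) (e 2 0)) (e 2 0) (a2 (E 0 0) (E 0 1) (E 0 2) (E 1 1) (E 1 2) (E 2 2) (e 0 0) (e 1 0) (e 2 0)) (e 1 0)) (sy (a2 (E 0 0) (E 0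 1) (E 0 2) (E 1 1) (E 1 2) (E 2 2) (e 0 0) (e 1 0) (e 2 0)) (e 2 0) (a2 (E 0 0) (E 0 1) (E 0 2) (E 1 1) (E 1 2) (E 2 2) (e 0 0) (e 1 0) (e 2 0)) (e 2 0)) (E 0 0) (E 0 1) (E 0 2) (E 1 1) (E 1 2) (E 2 2)) = 0.
  have hdet1 : DET 1 = (det6 (E 0 0) (E 0 1) (E 0 2) (E 1 1) (E 1 2) (E 2 2)).
    have <- : \det (1 *: Ehat + (1 - 1) *: E) = DET 1 by rewrite det_sym // !hEf ha0 ha1 ha2.
    by rewrite subrr scale0r addr0 scale1r /Ehat /Q det_Ehat' // det_sym.
  by move: hdet1; rewrite P1 hd0 mul1r expr1n mul1r add0r hD1 add0r.
split; first by rewrite P1 hd0 hD1 hD2; ring.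
rewrite P2.
have -> : (I26 (E 0 0) (E 0 1) (E 0 2) (E 1 1) (E 1 2) (E 2 2)) + f * (1 - f) * (na (E 0 0) (E 0 1) (E 0 2) (E 1 1) (E 1 2) (E 2 2) (e 0 0) (e 1 0) (e 2 0)) / 4 = ((I26 (E 0 0) (E 0 1) (E 0 2) (E 1 1) (E 1 2) (E 2 2)) + (na (E 0 0) (E 0 1) (E 0 2) (E 1 1) (E 1 2) (E 2 2) (e 0 0) (e 1 0) (e 2 0)) / 16) - (na (E 0 0) (E 0 1) (E 0 2) (E 1 1) (E 1 2) (E 2 2) (e 0 0) (e 1 0) (e 2 0)) * (f - 2^-1) ^+ 2 / 4 by field.
have := mulr_ge0 (ltW naP) (sqr_ge0 (f - 2^-1)); lra.
Qed.
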